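(* Let $k$ be an infinite field, $d>0$, $a\geq 7$ integers with $\gcd(a,d)=1$, $R=k[[t^a,t^{2a+d},t^{3a+3d},t^{4a+6d}]]$ with maximal ideal $\mathfrak{m}$, $I=(t^a)$, $F(I)=\bigoplus_{n\geq0}I^n/\mathfrak{m}I^n$ the fibre cone and $G_{\mathfrak{m}}=\bigoplus_{n\geq0}\mathfrak{m}^n/\mathfrak{m}^{n+1}$ the tangent cone. Then $G_{\mathfrak{m}}$ is a free graded $F(I)$-module and $$G_{\mathfrak{m}}\cong\bigoplus_{k=0}^{\lfloor a/6\rfloor+2}F(I)(-k)^{t_k},$$ where $t_k=\#\{i\mid 0\leq i\leq a-1,\ \mu_i+\nu_i+\xi_i=k\}$.
   Context: For $1\leq i\leq a-1$ write $i=6\mu_i+q_i$ with $0\leq q_i<6$, set $(\nu_i,\xi_i)=(1,q_i-3)$ if $q_i\geq3$ and $(\nu_i,\xi_i)=(0,q_i)$ if $q_i<3$; set $(\mu_0,\nu_0,\xi_0)=(0,0,0)$. $F(I)(-k)$ denotes the graded module $F(I)$ with degrees shifted by $k$. *)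

(* Defs.v *)
From HB Require Import structures.
From mathcomp Require Import all_boot all_order all_algebra.
Set Implicit Arguments. Unset Strict Implicit. Unset Printing Implicit Defensive.
Import GRing.Theory.
Local Open Scope ring_scope.

Section PowerSeries.
Variable K : fieldType.

Definition ps := nat -> K.
Definition ps0 : ps := fun _ => 0.
Definition psadd (f g : ps) : ps := fun n => f n + g n.
Definition psopp (f : ps) : ps := fun n => - f n.
Definition pssub (f g : ps) : ps := psadd f (psopp g).
Definition psmul (f g : ps) : ps := fun n => \sum_(i < n.+1) f i * g (n - i)%N.
Definition psX (m : nat) : ps := fun n => (n == m)%:R.

(* k[[t^g0, t^g1, t^g2, t^g3]] (for g_i >= 1): the image of the substitution
   k[[X0,X1,X2,X3]] -> k[[t]], X_i |-> t^{g_i}, i.e. the series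
   sum_alpha c_alpha t^{alpha0 g0 + ... + alpha3 g3}. *)
Definition subst_ring (g0 g1 g2 g3 : nat) : ps -> Prop := fun f =>
  exists c : nat -> nat -> nat -> nat -> K,
    forall n, f n =
      \sum_(i0 < n.+1) \sum_(i1 < n.+1) \sum_(i2 < n.+1) \sum_(i3 < n.+1)
        (if (i0 * g0 + i1 * g1 + i2 * g2 + i3 * g3 == n)%N
         then c i0 i1 i2 i3 else 0).

(* the maximal ideal of the local ring R (non-units = zero constant term) *)
Definition maxideal (R : ps -> Prop) : ps -> Prop := fun f => R f /\ f 0%N = 0.

Definition principal (R : ps -> Prop) (x : ps) : ps -> Prop :=
  fun f => exists r, R r /\ f = psmul r x.

Definition ideal_prod (A B : ps -> Prop) : ps -> Prop := fun f =>
  exists s : seq (ps * ps),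
    (forall i, (i < size s)%N ->
        A (nth (ps0, ps0) s i).1 /\ B (nth (ps0, ps0) s i).2) /\
    f = foldr (fun p acc => psadd (psmul p.1 p.2) acc) ps0 s.

Fixpoint ideal_pow (R J : ps -> Prop) (n : nat) : ps -> Prop :=
  match n with
  | 0 => R
  | n'.+1 => ideal_prod (ideal_pow R J n') J
  end.

(* [graded_free_iso R m I N t] : the tangent cone G_m = (+)_n m^n/m^{n+1}
   is isomorphic, as a graded F(I)-module (F(I) = (+)_n I^n/m I^n acting by
   multiplication), to (+)_{k=0}^{N} F(I)(-k)^{t k}.
   Unfolded: there are homogeneous elements e k j in degree k (classes of
   elements of m^k, j < t k) such that, in every degree n, the F(I)-linear map
   (+)_{k <= min(n,N), j < t k} F(I)_{n-k} -> m^n/m^{n+1},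
   (x_{k,j}) |-> sum x_{k,j} e_{k,j} is surjective and injective, where an
   element of F(I)_{n-k} = I^{n-k}/m I^{n-k} is represented by x in I^{n-k}. *)
Definition graded_free_iso (R m I : ps -> Prop) (N : nat) (t : nat -> nat) : Prop :=
  exists e : nat -> nat -> ps,
    (forall k j, (k <= N)%N -> (j < t k)%N -> ideal_pow R m k (e k j)) /\
    forall n : nat,
      let comb (x : nat -> nat -> ps) : ps :=
        \big[psadd/ps0]_(k < N.+1 | (k <= n)%N)
          \big[psadd/ps0]_(j < t k) psmul (x k j) (e k j) in
      let admissible (x : nat -> nat -> ps) : Prop :=
        forall k j, (k <= N)%N -> (k <= n)%N -> (j < t k)%N ->
          ideal_pow R I (n - k) (x k j) in
      (forall g, ideal_pow R m n g ->
         exists x, admissible x /\ ideal_pow R m n.+1 (pssub g (comb x))) /\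
      (forall x, admissible x -> ideal_pow R m n.+1 (comb x) ->
         forall k j, (k <= N)%N -> (k <= n)%N -> (j < t k)%N ->
           ideal_prod m (ideal_pow R I (n - k)) (x k j)).

End PowerSeries.

Local Open Scope nat_scope.
Definition mu_i (i : nat) : nat := i %/ 6.
Definition nu_i (i : nat) : nat := if (3 <= i %% 6)%N then 1 else 0.
Definition xi_i (i : nat) : nat := if (3 <= i %% 6)%N then (i %% 6 - 3)%N else i %% 6.

Definition tcount (a k : nat) : nat :=
  count (fun i => mu_i i + nu_i i + xi_i i == k)%N (iota 0 a).

(* Main.v *)
Require Import Defs.
From mathcomp Require Import all_boot all_order all_algebra.
From mathcomp Require Import zify.
From Stdlib Require Import Classical ClassicalEpsilon FunctionalExtensionality.
Set Implicit Arguments. Unset Strict Implicit.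
Import GRing.Theory.

Section PS.
Variable K : fieldType.
Implicit Types f g h : ps K.

Definition supp (P : nat -> Prop) (f : ps K) := forall s, f s != 0%R -> P s.

Lemma psX_eval m s : @psX K m s = if s == m then 1%R else 0%R.
Proof. by rewrite /psX; case: eqP. Qed.

Lemma sum_neq0 n (F : 'I_n -> K) : (\sum_(i < n) F i != 0)%R -> exists i : 'I_n, F i != 0%R.
Proof.
move=> h; apply/existsP; apply: contraR h => /existsPn H.
by rewrite big1 // => i _; apply/eqP/negPn/H.
Qed.

Lemma sum_pick n r (G : nat -> K) : r <= n ->
  (forall i, i <= n -> i != r -> G i = 0%R) -> (\sum_(i < n.+1) G i)%R = G r.
Proof.
move=> hr H; rewrite (bigD1 (Ordinal (hr : r < n.+1))) //= big1 ?addr0 // => i hi.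
apply: H; first by rewrite -ltnS.
by apply: contra hi => /eqP e; apply/eqP/val_inj.
Qed.

Lemma psmulX f m s : psmul f (psX K m) s = if m <= s then f (s - m) else 0%R.
Proof.
rewrite /psmul; case: leqP => hm.
  have hs : s - m < s.+1 by rewrite ltnS leq_subr.
  rewrite (bigD1 (Ordinal hs)) //= subKn // psX_eval eqxx mulr1 big1 ?addr0 //.
  move=> i hi; rewrite psX_eval; case: eqP => [e|]; last by rewrite mulr0.
  exfalso; move/eqP: hi; apply; apply: val_inj => /=.
  have := ltn_ord i; lia.
rewrite big1 // => i _; rewrite psX_eval; case: eqP => [e|]; last by rewrite mulr0.
exfalso; have := ltn_ord i; lia.
Qed.

Lemma term_eval w c (v : K) s :
  psmul (fun u => if u == c then v else 0%R) (psX K w) s = if s == w + c then v else 0%R.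
Proof.
rewrite psmulX; case: leqP => h.
  case: eqP => e; case: eqP => e' //; exfalso; lia.
case: eqP => // e; exfalso; lia.
Qed.

Lemma supp0 P : supp P (ps0 K).
Proof. by move=> s; rewrite /ps0 eqxx. Qed.

Lemma supp_add P f g : supp P f -> supp P g -> supp P (psadd f g).
Proof.
move=> hf hg s; rewrite /psadd => h.
case: (f s =P 0%R) => [e|/eqP]; last exact: hf.
by apply: hg; rewrite e add0r in h.
Qed.

Lemma supp_mul (P Q PQ : nat -> Prop) f g : supp P f -> supp Q g ->
  (forall x y, P x -> Q y -> PQ (x + y)) -> supp PQ (psmul f g).
Proof.
move=> hf hg H s /sum_neq0 [i]; rewrite mulf_eq0 negb_or => /andP [h1 h2].
have -> : s = i + (s - i) by have := ltn_ord i; lia.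
exact: H (hf _ h1) (hg _ h2).
Qed.

Lemma supp_mono (P Q : nat -> Prop) f : (forall s, P s -> Q s) -> supp P f -> supp Q f.
Proof. by move=> H hf s /hf /H. Qed.

Lemma prod_supp (A B : ps K -> Prop) (P Q PQ : nat -> Prop) f :
  (forall f, A f -> supp P f) -> (forall f, B f -> supp Q f) ->
  (forall x y, P x -> Q y -> PQ (x + y)) -> ideal_prod A B f -> supp PQ f.
Proof.
move=> hA hB H [l [hl ->]]; elim: l hl => [|p l IH] hl /=; first exact: supp0.
apply: supp_add; last by apply: IH => i hi; exact: (hl i.+1).
have [h1 h2] := hl 0 isT.
exact: supp_mul (hA _ h1) (hB _ h2) H.
Qed.

Lemma big_psadd_eval (I : Type) (r : seq I) (P : pred I) (F : I -> ps K) s :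
  (\big[@psadd K/ps0 K]_(i <- r | P i) F i) s = (\sum_(i <- r | P i) F i s)%R.
Proof.
apply: (big_rec2 (fun (A : ps K) (B : K) => A s = B)) => // i y1 y2 _ <-.
by [].
Qed.

Lemma sum2_pick N n (t : nat -> nat) (F : nat -> nat -> K) k0 j0 X :
  k0 <= N -> k0 <= n -> j0 < t k0 ->
  (forall k j, k <= N -> k <= n -> j < t k ->
     F k j = if (k == k0) && (j == j0) then X else 0%R) ->
  (\sum_(k < N.+1 | (k <= n)%N) \sum_(j < t k) F k j)%R = X.
Proof.
move=> hk0 hkn hj0 H.
have hk : k0 < N.+1 by [].
rewrite (bigD1 (Ordinal hk)) //= (bigD1 (Ordinal hj0)) //=.
rewrite H // !eqxx /= big1 ?addr0; last first.
  move=> j hj; rewrite H ?ltn_ord //.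
  rewrite eqxx /=; case: eqP => // e; exfalso; move/eqP: hj; apply; exact: val_inj.
rewrite big1 ?addr0 // => k /andP [hkn' hk'].
rewrite big1 // => j _; rewrite H ?ltn_ord //; last by rewrite -ltnS.
case: eqP => // e; exfalso; move/eqP: hk'; apply; exact: val_inj.
Qed.

End PS.

Lemma i_split i : exists mu q, i = 6*mu + q /\ q < 6 /\ mu_i i = mu /\
  nu_i i = (if 3 <= q then 1 else 0) /\ xi_i i = (if 3 <= q then q - 3 else q).
Proof.
exists (i %/ 6), (i %% 6); rewrite /mu_i /nu_i /xi_i.
split; first by rewrite {1}(divn_eq i 6); lia.
by rewrite ltn_mod.
Qed.

Lemma ord_ub i q x0 x1 x2 x3 E D :
  x1 + 3*x2 + 6*x3 = i + E -> (E = 0 /\ D = 0 \/ 7 <= E) ->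
  x0 + 2*x1 + 3*x2 + 4*x3 + D = 4 * mu_i i + 3 * nu_i i + 2 * xi_i i + q ->
  x0 + x1 + x2 + x3 <= mu_i i + nu_i i + xi_i i + q.
Proof.
have [mu [r [-> [hr [-> [-> ->]]]]]] := i_split i.
have : r = 0 \/ r = 1 \/ r = 2 \/ r = 3 \/ r = 4 \/ r = 5 by lia.
case=> [->|[->|[->|[->|[->|->]]]]] /=; lia.
Qed.

Lemma apery_lb i x1 x2 x3 E :
  x1 + 3*x2 + 6*x3 = i + E -> (E = 0 \/ 7 <= E) ->
  4 * mu_i i + 3 * nu_i i + 2 * xi_i i <= 2*x1 + 3*x2 + 4*x3.
Proof.
have [mu [r [-> [hr [-> [-> ->]]]]]] := i_split i.
have : r = 0 \/ r = 1 \/ r = 2 \/ r = 3 \/ r = 4 \/ r = 5 by lia.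
case=> [->|[->|[->|[->|[->|->]]]]] /=; lia.
Qed.

Definition gv (a d x0 x1 x2 x3 : nat) :=
  x0 * a + x1 * (2 * a + d) + x2 * (3 * a + 3 * d) + x3 * (4 * a + 6 * d).
Definition inS a d s := exists x0 x1 x2 x3, gv a d x0 x1 x2 x3 = s.
Definition geo a d n s := exists x0 x1 x2 x3, gv a d x0 x1 x2 x3 = s /\ n <= x0 + x1 + x2 + x3.
Definition Kf i := mu_i i + nu_i i + xi_i i.
Definition W a d i := i * d + a * (4 * mu_i i + 3 * nu_i i + 2 * xi_i i).

Lemma gv_split a d x0 x1 x2 x3 :
  gv a d x0 x1 x2 x3 = a * (x0 + 2*x1 + 3*x2 + 4*x3) + d * (x1 + 3*x2 + 6*x3).
Proof. rewrite /gv; nia. Qed.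

Lemma i_decomp i : i = 6 * mu_i i + 3 * nu_i i + xi_i i.
Proof.
have [mu [r [E [hr [-> [-> ->]]]]]] := i_split i.
have : r = 0 \/ r = 1 \/ r = 2 \/ r = 3 \/ r = 4 \/ r = 5 by lia.
case=> [e|[e|[e|[e|[e|e]]]]]; rewrite e /= in E *; lia.
Qed.

Lemma geo_inS a d n s : geo a d n s -> inS a d s.
Proof. by move=> [x0 [x1 [x2 [x3 [h _]]]]]; exists x0, x1, x2, x3. Qed.

Lemma inS_geo0 a d s : inS a d s -> geo a d 0 s.
Proof. by move=> [x0 [x1 [x2 [x3 h]]]]; exists x0, x1, x2, x3. Qed.

Lemma geo_add a d m n x y : geo a d m x -> geo a d n y -> geo a d (m + n) (x + y).
Proof.
move=> [x0 [x1 [x2 [x3 [h hl]]]]] [y0 [y1 [y2 [y3 [h' hl']]]]].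
exists (x0 + y0), (x1 + y1), (x2 + y2), (x3 + y3); split; last lia.
by rewrite -h -h' /gv; nia.
Qed.

Lemma inS_add a d x y : inS a d x -> inS a d y -> inS a d (x + y).
Proof. by move=> /inS_geo0 h /inS_geo0 h'; apply: geo_inS (geo_add h h'). Qed.

Lemma inS0 a d : inS a d 0.
Proof. by exists 0, 0, 0, 0. Qed.

Lemma geo_mono a d m n s : m <= n -> geo a d n s -> geo a d m s.
Proof.
move=> hmn [x0 [x1 [x2 [x3 [h hl]]]]]; exists x0, x1, x2, x3; split=> //; lia.
Qed.

Lemma inS_geo1 a d s : inS a d s -> s != 0 -> geo a d 1 s.
Proof.
move=> [x0 [x1 [x2 [x3 <-]]]] hs; exists x0, x1, x2, x3; split=> //.
move: hs; rewrite /gv; case: x0 => [|?]; case: x1 => [|?]; case: x2 => [|?];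
  case: x3 => [|?] //=; lia.
Qed.

Lemma geo_W a d i q : geo a d (Kf i + q) (W a d i + q * a).
Proof.
exists q, (xi_i i), (nu_i i), (mu_i i); split; last by rewrite /Kf; lia.
rewrite gv_split /W; move: (i_decomp i).
set m := mu_i i; set u := nu_i i; set x := xi_i i => hi.
rewrite [in i * d]hi; nia.
Qed.

Lemma mod_cancel a d x y : coprime a d -> d * x = d * y %[mod a] -> x = y %[mod a].
Proof.
move=> cop.
wlog hxy : x y / y <= x.
  move=> H h; case: (leqP y x) => hl; first exact: H.
  by apply/esym/H; [exact: ltnW|exact/esym].
move/eqP; rewrite eqn_mod_dvd ?leq_mul2l ?hxy ?orbT // -mulnBr Gauss_dvdr //.
by rewrite -eqn_mod_dvd // => /eqP.
Qed.

Lemma W_mod a d i q : W a d i + q * a = d * i %[mod a].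
Proof.
rewrite /W -addnA mulnC -modnDmr.
have -> : (a * (4 * mu_i i + 3 * nu_i i + 2 * xi_i i) + q * a) = a * (4 * mu_i i + 3 * nu_i i + 2 * xi_i i + q) by nia.
by rewrite modnMr addn0.
Qed.

Lemma W_uniq a d i i' q q' : coprime a d -> i < a -> i' < a ->
  W a d i + q * a = W a d i' + q' * a -> i = i'.
Proof.
move=> cop hi hi' e.
have : d * i = d * i' %[mod a] by rewrite -(W_mod a d i q) e W_mod.
move/(mod_cancel cop); rewrite !modn_small //.
Qed.

Lemma apery a d s : 7 <= a -> inS a d s -> exists i q, i < a /\ s = W a d i + q * a.
Proof.
move=> ha [x0 [x1 [x2 [x3 <-]]]]; rewrite gv_split.
set j := x1 + 3 * x2 + 6 * x3.
set A := x0 + 2 * x1 + 3 * x2 + 4 * x3.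
have hj := divn_eq j a.
have hi : j %% a < a by rewrite ltn_mod; lia.
exists (j %% a).
have hE : j %/ a * a = 0 \/ 7 <= j %/ a * a.
  case: (j %/ a) => [|r]; [by left|right; nia].
have hj' : j = j %% a + j %/ a * a by rewrite addnC.
have hlb := apery_lb hj' hE.
exists (A + d * (j %/ a) - (4 * mu_i (j %% a) + 3 * nu_i (j %% a) + 2 * xi_i (j %% a))).
split=> //; rewrite /W.
have hA : 2 * x1 + 3 * x2 + 4 * x3 <= A by rewrite /A; lia.
move: hlb hA; set P := (4 * mu_i (j %% a) + 3 * nu_i (j %% a) + 2 * xi_i (j %% a)).
move=> hlb hA; rewrite {1}hj; nia.
Qed.

Lemma geo_W_ub a d i q n : coprime a d -> 7 <= a -> i < a ->
  geo a d n (W a d i + q * a) -> n <= Kf i + q.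
Proof.
move=> cop ha hi [x0 [x1 [x2 [x3 [h hl]]]]].
apply: leq_trans hl _.
move: h; rewrite gv_split.
set j := x1 + 3 * x2 + 6 * x3.
set A := x0 + 2 * x1 + 3 * x2 + 4 * x3 => h.
have hm : d * j = d * i %[mod a].
  rewrite -(W_mod a d i q) -h mulnC -modnDml.
  by rewrite modnMr add0n.
move/(mod_cancel cop): hm; rewrite (modn_small hi) => hm.
have hj : j = j %/ a * a + i by rewrite {1}(divn_eq j a) hm.
have hE : (j %/ a * a = 0 /\ d * (j %/ a) = 0) \/ 7 <= j %/ a * a.
  case: (j %/ a) => [|r]; [by left; rewrite !muln0|right; nia].
have hB : A + d * (j %/ a) = 4 * mu_i i + 3 * nu_i i + 2 * xi_i i + q.
  have : a * (A + d * (j %/ a)) = a * (4 * mu_i i + 3 * nu_i i + 2 * xi_i i + q).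
    move: h; rewrite /W {1}hj; nia.
  by move/eqP; rewrite eqn_mul2l; case: eqP => [?|_ /eqP]; [lia|].
rewrite /Kf; apply: (ord_ub (x0 := x0) (E := j %/ a * a) (D := d * (j %/ a))) => //.
by rewrite /A in hB; lia.
Qed.

Definition Ls a k := filter (fun i => mu_i i + nu_i i + xi_i i == k) (iota 0 a).
Definition idx a k j := nth 0 (Ls a k) j.

Lemma tcountE a k : tcount a k = size (Ls a k).
Proof. by rewrite /tcount /Ls size_filter. Qed.

Lemma idx_spec a k j : j < tcount a k -> idx a k j < a /\ Kf (idx a k j) = k.
Proof.
rewrite tcountE => hj.
have := mem_nth 0 hj; rewrite mem_filter mem_iota add0n => /andP [/eqP h1 /andP [_ h2]].
by split.
Qed.

Lemma idx_inj a k j k' j' : j < tcount a k -> j' < tcount a k' ->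
  idx a k j = idx a k' j' -> k = k' /\ j = j'.
Proof.
move=> hj hj' e.
have [_ h1] := idx_spec hj; have [_ h2] := idx_spec hj'.
have ekk : k = k' by rewrite -h1 -h2 e.
split=> //; subst k'.
rewrite tcountE in hj hj'.
apply/eqP; rewrite -(nth_uniq 0 hj hj'); first by apply/eqP.
by rewrite filter_uniq // iota_uniq.
Qed.

Lemma idx_surj a i : i < a -> exists j, j < tcount a (Kf i) /\ idx a (Kf i) j = i.
Proof.
move=> hi; exists (index i (Ls a (Kf i))).
have hin : i \in Ls a (Kf i) by rewrite mem_filter mem_iota /Kf eqxx /= add0n hi.
by rewrite tcountE index_mem hin /idx nth_index.
Qed.

Lemma Kf_bound a i : i < a -> Kf i <= a %/ 6 + 2.
Proof.
move=> hi; rewrite /Kf.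
have [mu [r [E [hr [-> [-> ->]]]]]] := i_split i.
have ha := divn_eq a 6; have hra : a %% 6 < 6 by rewrite ltn_mod.
move: ha hra; set A := a %/ 6; set ra := a %% 6 => ha hra.
have : r = 0 \/ r = 1 \/ r = 2 \/ r = 3 \/ r = 4 \/ r = 5 by lia.
case=> [e|[e|[e|[e|[e|e]]]]]; rewrite e /=; lia.
Qed.

Definition rep a d s : nat * nat * nat * nat :=
  match excluded_middle_informative
          (exists x : nat * nat * nat * nat, gv a d x.1.1.1 x.1.1.2 x.1.2 x.2 = s) with
  | left H => proj1_sig (constructive_indefinite_description _ H)
  | right _ => (0, 0, 0, 0) end.

Lemma rep_spec a d s : inS a d s ->
  gv a d (rep a d s).1.1.1 (rep a d s).1.1.2 (rep a d s).1.2 (rep a d s).2 = s.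
Proof.
move=> hs; rewrite /rep; case: excluded_middle_informative => [H|H].
  by case: constructive_indefinite_description.
exfalso; apply: H; move: hs => [x0 [x1 [x2 [x3 h]]]]; by exists (x0, x1, x2, x3).
Qed.

Definition Gen a d j := nth 0 [:: a; 2 * a + d; 3 * a + 3 * d; 4 * a + 6 * d] j.

Definition choose a d n s : nat :=
  match excluded_middle_informative
          (exists j, j < 4 /\ Gen a d j <= s /\ geo a d n (s - Gen a d j)) with
  | left H => proj1_sig (constructive_indefinite_description _ H)
  | right _ => 0 end.

Lemma geo_succ a d n s : geo a d n.+1 s ->
  exists j, j < 4 /\ Gen a d j <= s /\ geo a d n (s - Gen a d j).
Proof.
move=> [x0 [x1 [x2 [x3 [<- hl]]]]].
have : 0 < x0 \/ 0 < x1 \/ 0 < x2 \/ 0 < x3 by lia.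
case=> [h|[h|[h|h]]].
- exists 0; split=> //; split; first by rewrite /gv /Gen /=; nia.
  exists (x0 - 1), x1, x2, x3; split; [rewrite /gv /Gen /=; nia|lia].
- exists 1; split=> //; split; first by rewrite /gv /Gen /=; nia.
  exists x0, (x1 - 1), x2, x3; split; [rewrite /gv /Gen /=; nia|lia].
- exists 2; split=> //; split; first by rewrite /gv /Gen /=; nia.
  exists x0, x1, (x2 - 1), x3; split; [rewrite /gv /Gen /=; nia|lia].
- exists 3; split=> //; split; first by rewrite /gv /Gen /=; nia.
  exists x0, x1, x2, (x3 - 1); split; [rewrite /gv /Gen /=; nia|lia].
Qed.

Lemma choose_spec a d n s : geo a d n.+1 s ->
  choose a d n s < 4 /\ Gen a d (choose a d n s) <= s /\
  geo a d n (s - Gen a d (choose a d n s)).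
Proof.
move/geo_succ => hs; rewrite /choose; case: excluded_middle_informative => [H|H] //.
by case: constructive_indefinite_description.
Qed.

Lemma inS_Gen a d j : j < 4 -> inS a d (Gen a d j).
Proof.
case: j => [|[|[|[|j]]]] // _.
- by exists 1, 0, 0, 0; rewrite /gv /Gen /=; lia.
- by exists 0, 1, 0, 0; rewrite /gv /Gen /=; lia.
- by exists 0, 0, 1, 0; rewrite /gv /Gen /=; lia.
- by exists 0, 0, 0, 1; rewrite /gv /Gen /=; lia.
Qed.

Lemma Gen_pos a d j : 0 < a -> j < 4 -> 0 < Gen a d j.
Proof. by case: j => [|[|[|[|j]]]] //= ha _; rewrite /Gen /=; lia. Qed.

Definition Ip a d p s := exists u, inS a d u /\ s = p * a + u.

Section Ideals.
Variables (K : fieldType) (a d : nat).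
Hypothesis ha : 0 < a.
Local Notation RR := (@subst_ring K a (2 * a + d) (3 * a + 3 * d) (4 * a + 6 * d)).
Local Notation MM := (maxideal RR).
Local Notation II := (principal RR (psX K a)).

Lemma R_supp f : RR f -> supp (inS a d) f.
Proof.
move=> [c hc] s; rewrite hc => /sum_neq0 [i0] /sum_neq0 [i1] /sum_neq0 [i2] /sum_neq0 [i3].
case: ifP => [/eqP e _|_]; last by rewrite eqxx.
by exists i0, i1, i2, i3.
Qed.

Lemma sum4_pick n (T : nat -> nat -> nat -> nat -> K) r0 r1 r2 r3 :
  r0 <= n -> r1 <= n -> r2 <= n -> r3 <= n ->
  (forall i0 i1 i2 i3, (i0, i1, i2, i3) != (r0, r1, r2, r3) -> T i0 i1 i2 i3 = 0%R) ->
  (\sum_(i0 < n.+1) \sum_(i1 < n.+1) \sum_(i2 < n.+1) \sum_(i3 < n.+1) T i0 i1 i2 i3)%R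
  = T r0 r1 r2 r3.
Proof.
move=> h0 h1 h2 h3 H.
rewrite (@sum_pick K n r0 (fun i0 => \sum_(i1 < n.+1) \sum_(i2 < n.+1) \sum_(i3 < n.+1) T i0 i1 i2 i3)%R) //; last first.
  move=> i _ hi; rewrite big1 // => j1 _; rewrite big1 // => j2 _; rewrite big1 // => j3 _.
  by apply: H; apply: contra hi => /eqP; case; intros; apply/eqP; lia.
rewrite (@sum_pick K n r1 (fun i1 => \sum_(i2 < n.+1) \sum_(i3 < n.+1) T r0 i1 i2 i3)%R) //; last first.
  move=> i _ hi; rewrite big1 // => j2 _; rewrite big1 // => j3 _.
  by apply: H; apply: contra hi => /eqP; case; intros; apply/eqP; lia.
rewrite (@sum_pick K n r2 (fun i2 => \sum_(i3 < n.+1) T r0 r1 i2 i3)%R) //; last first.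
  move=> i _ hi; rewrite big1 // => j3 _.
  by apply: H; apply: contra hi => /eqP; case; intros; apply/eqP; lia.
rewrite (@sum_pick K n r3 (fun i3 => T r0 r1 r2 i3)) //.
by move=> i _ hi; apply: H; apply: contra hi => /eqP; case; intros; apply/eqP; lia.
Qed.

Lemma supp_R f : supp (inS a d) f -> RR f.
Proof.
move=> hf.
exists (fun i0 i1 i2 i3 => if rep a d (gv a d i0 i1 i2 i3) == (i0, i1, i2, i3)
                           then f (gv a d i0 i1 i2 i3) else 0%R) => n.
case: (f n =P 0%R) => [fn0|/eqP fn].
  rewrite fn0; symmetry.
  rewrite big1 // => i0 _; rewrite big1 // => i1 _; rewrite big1 // => i2 _; rewrite big1 // => i3 _.
  case: eqP => // e; rewrite /gv e fn0; exact: if_same.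
have hn := rep_spec (hf _ fn).
move: hn; case E: (rep a d n) => [[[r0 r1] r2] r3] /= hn.
rewrite (@sum4_pick n (fun i0 i1 i2 i3 : nat =>
  if (i0 * a + i1 * (2 * a + d) + i2 * (3 * a + 3 * d) + i3 * (4 * a + 6 * d) == n)%N
  then (if rep a d (gv a d i0 i1 i2 i3) == (i0, i1, i2, i3) then f (gv a d i0 i1 i2 i3) else 0%R)
  else 0%R) r0 r1 r2 r3).
- by rewrite /= -{1 2}hn /gv eqxx -/(gv a d r0 r1 r2 r3) hn E eqxx.
- by move: hn; rewrite /gv; nia.
- by move: hn; rewrite /gv; nia.
- by move: hn; rewrite /gv; nia.
- by move: hn; rewrite /gv; nia.
- move=> i0 i1 i2 i3 hne /=; case: ifP => // /eqP e.
  have e' : gv a d i0 i1 i2 i3 = n := e.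
  by rewrite e' E eq_sym (negbTE hne).
Qed.

Lemma m_supp f : MM f -> supp (geo a d 1) f.
Proof.
move=> [hR h0] s hs; apply: inS_geo1; first exact: R_supp hR s hs.
by apply: contraNneq hs => ->; rewrite h0.
Qed.

Lemma pow_supp n f : ideal_pow RR MM n f -> supp (geo a d n) f.
Proof.
elim: n f => [|n IH] f /=.
  by move/R_supp; apply: supp_mono => s; exact: inS_geo0.
apply: prod_supp IH m_supp _ => x y hx hy.
by rewrite -addn1; exact: geo_add.
Qed.

Lemma X_in_m j : j < 4 -> MM (psX K (Gen a d j)).
Proof.
move=> hj; split.
  by apply: supp_R => s; rewrite psX_eval; case: ifP => [/eqP -> _|_]; [exact: inS_Gen|by rewrite eqxx].
by rewrite psX_eval; case: eqP => // e; have := Gen_pos d ha hj; lia.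
Qed.

Lemma supp_pow n f : supp (geo a d n) f -> ideal_pow RR MM n f.
Proof.
elim: n f => [|n IH] f hf /=.
  by apply: supp_R; apply: supp_mono hf => s; exact: geo_inS.
set h := fun j u => if choose a d n (u + Gen a d j) == j then f (u + Gen a d j) else 0%R.
have hh : forall j, ideal_pow RR MM n (h j).
  move=> j; apply: IH => u; rewrite /h; case: ifP => [/eqP e hu|_]; last by rewrite eqxx.
  by have := choose_spec (hf _ hu); rewrite e addnK => -[_ [_ ?]].
have tm : forall j s, psmul (h j) (psX K (Gen a d j)) s =
    if (Gen a d j <= s) && (choose a d n s == j) then f s else 0%R.
  by move=> j s; rewrite psmulX; case: leqP => hl //=; rewrite /h subnK.
exists [:: (h 0, psX K (Gen a d 0)); (h 1, psX K (Gen a d 1));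
           (h 2, psX K (Gen a d 2)); (h 3, psX K (Gen a d 3))]; split.
  by move=> [|[|[|[|i]]]] //= _; split; apply: hh || apply: X_in_m.
apply: functional_extensionality => s /=; rewrite /psadd /ps0 !tm addr0.
case: (f s =P 0%R) => [->|/eqP fs]; first by rewrite !if_same !addr0.
have [hc [hg _]] := choose_spec (hf _ fs).
have : choose a d n s = 0 \/ choose a d n s = 1 \/ choose a d n s = 2 \/ choose a d n s = 3 by lia.
by case=> [e|[e|[e|e]]]; rewrite e in hg *; rewrite hg /= ?andbF /= ?addr0 ?add0r.
Qed.

Lemma I_supp f : II f -> supp (Ip a d 1) f.
Proof.
move=> [r [hr ->]]; apply: (supp_mul (R_supp hr) (Q := fun y => y = a)).
  by move=> s; rewrite psX_eval; case: ifP => [/eqP -> //|_]; rewrite eqxx.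
by move=> x y hx ->; exists x; split=> //; lia.
Qed.

Lemma powI_supp p f : ideal_pow RR II p f -> supp (Ip a d p) f.
Proof.
elim: p f => [|p IH] f /=.
  by move/R_supp; apply: supp_mono => s hs; exists s; split.
apply: prod_supp IH I_supp _ => x y [u [hu ->]] [v [hv ->]].
by exists (u + v); split; [exact: inS_add|rewrite mulSn; nia].
Qed.

Lemma supp_powI p f : supp (Ip a d p) f -> ideal_pow RR II p f.
Proof.
elim: p f => [|p IH] f hf /=.
  by apply: supp_R; apply: supp_mono hf => s [u [hu ->]].
exists [:: (fun u => f (u + a), psX K a)]; split.
  move=> [|i] //= _; split.
    apply: IH => u /hf [w [hw e]]; exists w; split=> //; move: e; rewrite mulSn; lia.
  exists (psX K 0); split.
    by apply: supp_R => s; rewrite psX_eval; case: ifP => [/eqP -> _|_]; [exact: inS0|by rewrite eqxx].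
  apply: functional_extensionality => s; rewrite psmulX !psX_eval.
  case: leqP => hs; repeat case: ifP => /eqP ? //; exfalso; lia.
apply: functional_extensionality => s /=; rewrite /psadd /ps0 psmulX addr0.
case: leqP => hs; first by rewrite subnK.
case: (f s =P 0%R) => // /eqP /hf [w [_ e]]; exfalso; move: e; rewrite mulSn; lia.
Qed.

Lemma mI_mem p x : supp (Ip a d p) x -> x (p * a) = 0%R ->
  ideal_prod MM (ideal_pow RR II p) x.
Proof.
move=> hx h0.
exists [:: (fun u => x (u + p * a), psX K (p * a))]; split.
  move=> [|i] //= _; split.
    split; last by rewrite add0n.
    apply: supp_R => u /hx [w [hw e]].
    by have -> : u = w by lia.
  apply: supp_powI => s; rewrite psX_eval; case: ifP => [/eqP -> _|_]; last by rewrite eqxx.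
  by exists 0; split; [exact: inS0|rewrite addn0].
apply: functional_extensionality => s /=; rewrite /psadd /ps0 psmulX addr0.
case: leqP => hs; first by rewrite subnK.
case: (x s =P 0%R) => // /eqP /hx [w [_ e]]; exfalso; lia.
Qed.

End Ideals.

Lemma comb_eval (K : fieldType) N n (t : nat -> nat) (F : nat -> nat -> ps K) s :
  (\big[@psadd K/ps0 K]_(kk < N.+1 | (kk <= n)%N) \big[@psadd K/ps0 K]_(j < t kk) F kk j) s
  = (\sum_(kk < N.+1 | (kk <= n)%N) \sum_(j < t kk) F kk j s)%R.
Proof.
rewrite big_psadd_eval; apply: eq_bigr => kk _; exact: big_psadd_eval.
Qed.

Lemma pssubE (K : fieldType) (f g : ps K) s : pssub f g s = (f s - g s)%R.
Proof. by []. Qed.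

Theorem corollary6p7 (k : fieldType) (a d : nat)
  (k_infinite : forall s : seq k, exists x : k, x \notin s)
  (d_pos : (0 < d)%N) (a_ge7 : (7 <= a)%N) (cop_ad : coprime a d) :
  let R := @subst_ring k a (2 * a + d) (3 * a + 3 * d) (4 * a + 6 * d) in
  let m := maxideal R in
  let I := principal R (@psX k a) in
  graded_free_iso R m I (a %/ 6 + 2) (tcount a).
Proof.
cbv zeta; rewrite /graded_free_iso.
have ha1 : (0 < a)%N by lia.
exists (fun kk j => psX k (W a d (idx a kk j))); split.
  move=> kk j hk hj; apply: supp_pow => // s.
  rewrite psX_eval; case: ifP => [/eqP -> _|_]; last by rewrite eqxx.
  have [hi hK] := idx_spec hj.
  by have := geo_W a d (idx a kk j) 0; rewrite addn0 mul0n addn0 hK.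
move=> n; cbv zeta; split.
  move=> g hg.
  exists (fun kk j u => if u == (n - kk) * a then g (W a d (idx a kk j) + (n - kk) * a) else 0%R).
  split.
    move=> kk j hk hkn hj; apply: supp_powI => // u.
    case: ifP => [/eqP -> _|_]; last by rewrite eqxx.
    by exists 0; split; [exact: inS0|rewrite addn0].
  apply: supp_pow => // s hs.
  apply: NNPP => hn; move: hs; apply/negP; rewrite negbK.
  rewrite pssubE big_psadd_eval.
  under eq_bigr => kk _ do rewrite big_psadd_eval.
  under eq_bigr => kk _ do under eq_bigr => j _ do rewrite term_eval.
  case: (g s =P 0%R) => [gs0|/eqP gs].
    rewrite gs0 big1 ?subrr // => kk _; rewrite big1 // => j _.
    by case: ifP => // /eqP e; rewrite -e.
  have hgn := pow_supp hg gs.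
  have [i0 [q [hi0 es]]] := apery a_ge7 (geo_inS hgn).
  have ub : (n <= Kf i0 + q)%N by apply: geo_W_ub cop_ad a_ge7 hi0 _; rewrite -es.
  have lb : (Kf i0 + q <= n)%N.
    case: leqP => // hl; exfalso; apply: hn; rewrite es.
    exact: geo_mono hl (geo_W a d i0 q).
  have [j0 [hj0 hidx]] := idx_surj hi0.
  rewrite (@sum2_pick k (a %/ 6 + 2) n (tcount a) (fun kk j =>
     if s == W a d (idx a kk j) + (n - kk) * a then g (W a d (idx a kk j) + (n - kk) * a) else 0%R)
     (Kf i0) j0 (g s)) ?subrr //.
  - exact: Kf_bound.
  - by lia.
  move=> kk j hk hkn hj; have [hi hK] := idx_spec hj.
  case: ifP => [/eqP e|/negbT ne].
    have ei : idx a kk j = i0.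
      by rewrite (W_uniq (q := n - kk) (q' := q) cop_ad hi hi0) // -e.
    have [ek ej] := idx_inj hj hj0 (etrans ei (esym hidx)).
    by rewrite -e ek ej !eqxx.
  case: andP => // -[/eqP ek /eqP ej]; exfalso; move/eqP: ne; apply.
  by rewrite ek ej hidx es; congr (_ + _); congr (_ * _); lia.
move=> x hadm hc kk j hk hkn hj.
have [hi hK] := idx_spec hj.
set i := idx a kk j in hi hK *.
set s0 := W a d i + (n - kk) * a.
have hno : ~ geo a d n.+1 s0.
  by move/(geo_W_ub cop_ad a_ge7 hi); rewrite hK; lia.
have hc0 := pow_supp hc (s := s0).
move: hc0; rewrite big_psadd_eval.
under eq_bigr => kk' _ do rewrite big_psadd_eval.
rewrite (@sum2_pick k (a %/ 6 + 2) n (tcount a) (fun kk' j' =>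
     psmul (x kk' j') (psX k (W a d (idx a kk' j'))) s0) kk j (x kk j ((n - kk) * a))) //.
- move=> hX; apply: mI_mem => //; first by move=> s; apply: (powI_supp ha1 (hadm _ _ hk hkn hj)).
  by apply/eqP; apply: contraT => /hX /hno.
move=> kk' j' hk' hkn' hj'; have [hi' hK'] := idx_spec hj'.
rewrite psmulX.
case E: ((kk' == kk) && (j' == j)).
  by move/andP: E => [/eqP -> /eqP ->]; rewrite leq_addr addKn.
case: leqP => hle //.
case: (x kk' j' (s0 - W a d (idx a kk' j')) =P 0%R) => // /eqP hne; exfalso.
have [u [hu eu]] := powI_supp ha1 (hadm _ _ hk' hkn' hj') hne.
case: (u =P 0) => [u0|/eqP un0].
  have ei : idx a kk' j' = i.
    apply: (W_uniq (q := n - kk') (q' := n - kk) cop_ad hi' hi).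
    by rewrite -/s0; move: eu; rewrite u0; lia.
  have [ek ej] := idx_inj hj' hj ei.
  by move: E; rewrite ek ej !eqxx.
apply: hno.
have := geo_add (geo_W a d (idx a kk' j') (n - kk')) (inS_geo1 hu un0).
have -> : (Kf (idx a kk' j') + (n - kk') + 1 = n.+1)%N by rewrite hK'; lia.
by have -> : (W a d (idx a kk' j') + (n - kk') * a + u = s0)%N by lia.
Qed.
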